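(* Let $\hbar\neq0$ and let $B$ be an associative algebra containing (linearly) $\mathfrak h$ and elements $\xi_{i,r},x^\pm_{i,r}$ ($i\in I$, $r\in\mathbb N$) satisfying $\xi_{i,0}=d_i\alpha_i^\vee$. Then, in $B[u,v;u^{-1},v^{-1}]]$ (and, for (6), in the analogous ring of series in several variables), the relations (Y1), (Y2)–(Y3), (Y4), (Y5), (Y6) are respectively equivalent to: ($\mathcal Y$1) $[\xi_i(u),\xi_j(v)]=0$, $[\xi_i(u),h]=0$, $[h,h']=0$ for all $i,j\in I$, $h,h'\in\mathfrak h$; ($\mathcal Y$2) $[h,x_i^\pm(u)]=\pm\alpha_i(h)x_i^\pm(u)$, together with ($\mathcal Y$3) $(u-v\mp a)\xi_i(u)x_j^\pm(v)=(u-v\pm a)x_j^\pm(v)\xi_i(u)\mp2a\,x_j^\pm(u\mp a)\xi_i(u)$, where $a=\hbar d_ia_{ij}/2$; ($\mathcal Y$4) $(u-v\mp a)x_i^\pm(u)x_j^\pm(v)=(u-v\pm a)x_j^\pm(v)x_i^\pm(u)+\hbar\left([x^\pm_{i,0},x_j^\pm(v)]-[x_i^\pm(u),x^\pm_{j,0}]\right)$, $a=\hbar d_ia_{ij}/2$; ($\mathcal Y$5) $(u-v)[x_i^+(u),x_j^-(v)]=-\delta_{ij}\hbar(\xi_i(u)-\xi_i(v))$; ($\mathcal Y$6) for $i\ne j$ and $m=1-a_{ij}$: $\sum_{\pi\in S_m}[x_i^\pm(u_{\pi(1)}),[x_i^\pm(u_{\pi(2)}),[\cdots,[x_i^\pm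(u_{\pi(m)}),x_j^\pm(v)]\cdots]]]=0$.
   Context: $I$ finite, $(a_{ij})$ a symmetrisable generalized Cartan matrix with relatively prime positive symmetrising integers $d_i$ ($(d_ia_{ij})$ symmetric), $(\mathfrak h,\{\alpha_i\},\{\alpha_i^\vee\})$ its realization ($\alpha_j(\alpha_i^\vee)=a_{ij}$). The relations are: (Y1) all $\xi_{i,r}$ and all $h\in\mathfrak h$ pairwise commute; (Y2) $[h,x^\pm_{j,s}]=\pm\alpha_j(h)x^\pm_{j,s}$; (Y3) $[\xi_{i,r+1},x^\pm_{j,s}]-[\xi_{i,r},x^\pm_{j,s+1}]=\pm\frac{\hbar d_ia_{ij}}2(\xi_{i,r}x^\pm_{j,s}+x^\pm_{j,s}\xi_{i,r})$; (Y4) $[x^\pm_{i,r+1},x^\pm_{j,s}]-[x^\pm_{i,r},x^\pm_{j,s+1}]=\pm\frac{\hbar d_ia_{ij}}2(x^\pm_{i,r}x^\pm_{j,s}+x^\pm_{j,s}x^\pm_{i,r})$; (Y5) $[x^+_{i,r},x^-_{j,s}]=\delta_{ij}\xi_{i,r+s}$; (Y6) for $i\ne j$, $m=1-a_{ij}$, $r_1,\dots,r_m,s\in\mathbb N$: $\sum_{\pi\in S_m}[x^\pm_{i,r_{\pi(1)}},[x^\pm_{i,r_{\pi(2)}},[\cdots,[x^\pm_{i,r_{\pi(m)}},x^\pm_{j,s}]\cdots]]]=0$ (all for all $i,j\in I$, $r,s\in\mathbb N$, $h\in\mathfrak h$). Generating series: $\xi_i(u)=1+\hbar\sum_{r\ge0}\xi_{i,r}u^{-r-1}$,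 $x_i^\pm(u)=\hbar\sum_{r\ge0}x^\pm_{i,r}u^{-r-1}$; $x_j^\pm(u\mp a)$ means the expansion in $u^{-1}$. *)

(* Defs.v *)
From HB Require Import structures.
From mathcomp Require Import all_boot all_order all_algebra all_fingroup.
Set Implicit Arguments. Unset Strict Implicit. Unset Printing Implicit Defensive.
Import Order.TTheory GRing.Theory Num.Theory.
Local Open Scope ring_scope.

(*  ser B      : one-variable series  F(u) = \sum_k F k * u^{-k}              *)
(*  mser B N   : series in N variables u_0..u_{N-1} with only nonpositive     *)
(*               powers:  S = \sum_e S e * prod_k u_k^{-e k}                  *)
(*  lser B N   : arbitrary coefficient functions on Z^N (coefficient of       *)
(*               prod_k u_k^{e k}); contains B[u_k; u_k^{-1}]] and is a       *)
(*               module over polynomials in the u_k (lmulvar = mult. by u_k). *)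

Definition ser (B : Type) := nat -> B.
Definition mser (B : Type) (N : nat) := {ffun 'I_N -> nat} -> B.
Definition lser (B : Type) (N : nat) := {ffun 'I_N -> int} -> B.

Section Series.
Variable B : ringType.

Definition smul (F G : ser B) : ser B :=
  fun k => \sum_(l < k.+1) F l * G (k - l)%N.
Definition scst (b : B) : ser B := fun k => if k is 0%N then b else 0.

Variable N : nat.
Definition mmul (S T : mser B N) : mser B N :=
  fun e => \sum_(dd : {dffun forall k : 'I_N, 'I_(e k).+1})
              S [ffun k => nat_of_ord (dd k)] * T [ffun k => (e k - dd k)%N].
Definition mcomm (S T : mser B N) : mser B N := fun e => mmul S T e - mmul T S e.
Definition mnest (l : seq (mser B N)) (Y : mser B N) : mser B N :=
  foldr (fun X acc => mcomm X acc) Y l.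
Definition msingle (k : 'I_N) (F : ser B) : mser B N :=
  fun e => if [forall j, (j != k) ==> (e j == 0%N)] then F (e k) else 0.
Definition toL (S : mser B N) : lser B N :=
  fun e => if [forall k, e k <= 0] then S [ffun k => `|e k|%N] else 0.
Definition lmulvar (k : 'I_N) (L : lser B N) : lser B N :=
  fun e => L [ffun j => e j - (j == k)%:Z].
End Series.

Definition comm (B : ringType) (x y : B) := x * y - y * x.
Definition nest (B : ringType) (l : seq B) (y : B) :=
  foldr (fun x acc => comm x acc) y l.

Definition vu : 'I_2 := ord0.
Definition vv : 'I_2 := ord_max.

Section Shift.
Variables (K : fieldType) (B : algType K).
(* F(u - c), expanded in u^{-1}:  (u-c)^{-m} = \sum_k C(m+k-1,k) c^k u^{-m-k} *)
Definition sshift (c : K) (F : ser B) : ser B :=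
  fun k => \sum_(l < k.+1) (('C(k.-1, k - l))%:R * c ^+ (k - l)) *: F l.
Definition lin_uv (c : K) (L : lser B 2) : lser B 2 :=
  fun e => lmulvar vu L e - lmulvar vv L e + c *: L e.
End Shift.

Definition GCM (n : nat) (A : 'I_n -> 'I_n -> int) :=
  [/\ forall i, A i i = 2,
      forall i j, i != j -> A i j <= 0
    & forall i j, (A i j == 0) = (A j i == 0)].

Definition symmetrising (n : nat) (A : 'I_n -> 'I_n -> int) (d : 'I_n -> nat) :=
  [/\ forall i, (0 < d i)%N,
      forall i j, (d i)%:Z * A i j = (d j)%:Z * A j i
    & \big[gcdn/0%N]_i d i = 1%N].

Definition realization (K : fieldType) (hT : vectType K) (n : nat)
    (A : 'I_n -> 'I_n -> int) (alpha : 'I_n -> {linear hT -> K^o})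
    (alphav : 'I_n -> hT) :=
  [/\ forall i j, alpha j (alphav i) = (A i j)%:~R :> K,
      free [seq alphav i | i <- enum 'I_n],
      (forall c : 'I_n -> K,
          (forall h, \sum_i c i * (alpha i h : K) = 0) -> forall i, c i = 0)
    & \dim (fullv : {vspace hT}) =
        (2 * n - \rank (\matrix_(i, j) (A i j)%:~R : 'M[K]_n))%N].

Section Relations.
Variables (K : fieldType) (B : algType K) (hT : vectType K) (n : nat).
Variables (A : 'I_n -> 'I_n -> int) (d : 'I_n -> nat).
Variables (alpha : 'I_n -> {linear hT -> K^o}) (iota : {linear hT -> B}).
Variables (hbar : K) (xi xp xm : 'I_n -> nat -> B).

Definition xpm (s : bool) := if s then xp else xm.
Definition sgn (s : bool) : K := if s then 1 else -1.
Definition acoef (i j : 'I_n) : K := hbar * (d i)%:R * (A i j)%:~R / 2.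

(* generating series xi_i(u) = 1 + hbar \sum xi_{i,r} u^{-r-1},
   x_i^pm(u) = hbar \sum x^pm_{i,r} u^{-r-1} *)
Definition xis (i : 'I_n) : ser B :=
  fun k => if k is r.+1 then hbar *: xi i r else 1.
Definition xs (s : bool) (i : 'I_n) : ser B :=
  fun k => if k is r.+1 then hbar *: xpm s i r else 0.

Definition Y1 :=
  [/\ forall i j r t, comm (xi i r) (xi j t) = 0,
      forall i r h, comm (xi i r) (iota h) = 0
    & forall h h', comm (iota h) (iota h') = 0].
Definition Y2 :=
  forall s h j t, comm (iota h) (xpm s j t) = (sgn s * (alpha j h : K)) *: xpm s j t.
Definition Y3 :=
  forall s i j r t,
    comm (xi i r.+1) (xpm s j t) - comm (xi i r) (xpm s j t.+1)
    = (sgn s * acoef i j) *: (xi i r * xpm s j t + xpm s j t * xi i r).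
Definition Y4 :=
  forall s i j r t,
    comm (xpm s i r.+1) (xpm s j t) - comm (xpm s i r) (xpm s j t.+1)
    = (sgn s * acoef i j) *: (xpm s i r * xpm s j t + xpm s j t * xpm s i r).
Definition Y5 :=
  forall i j r t, comm (xp i r) (xm j t) = (i == j)%:R * xi i (r + t).
Definition Y6 :=
  forall s i j, i != j ->
    forall (r : 'I_`|1 - A i j|%N -> nat) (t : nat),
      \sum_(p : 'S_(`|1 - A i j|%N))
         nest [seq xpm s i (r (p k)) | k <- enum 'I_(`|1 - A i j|%N)] (xpm s j t)
      = 0.

Definition CY1 :=
  [/\ forall i j e, mcomm (msingle vu (xis i)) (msingle vv (xis j)) e = 0,
      forall i h k, smul (xis i) (scst (iota h)) k - smul (scst (iota h)) (xis i) k = 0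
    & forall h h', comm (iota h) (iota h') = 0].
Definition CY2 :=
  forall s h i k,
    smul (scst (iota h)) (xs s i) k - smul (xs s i) (scst (iota h)) k
    = (sgn s * (alpha i h : K)) *: xs s i k.
Definition CY3 :=
  forall s i j e,
    lin_uv (- (sgn s * acoef i j))
           (toL (mmul (msingle vu (xis i)) (msingle vv (xs s j)))) e
    = lin_uv (sgn s * acoef i j)
           (toL (mmul (msingle vv (xs s j)) (msingle vu (xis i)))) e
      - (2 * sgn s * acoef i j) *:
           toL (msingle vu (smul (sshift (sgn s * acoef i j) (xs s j)) (xis i))) e.
Definition CY4 :=
  forall s i j e,
    lin_uv (- (sgn s * acoef i j))
           (toL (mmul (msingle vu (xs s i)) (msingle vv (xs s j)))) e
    = lin_uv (sgn s * acoef i j)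
           (toL (mmul (msingle vv (xs s j)) (msingle vu (xs s i)))) e
      + hbar *: (toL (msingle vv (fun k => smul (scst (xpm s i 0)) (xs s j) k
                                          - smul (xs s j) (scst (xpm s i 0)) k)) e
                 - toL (msingle vu (fun k => smul (xs s i) (scst (xpm s j 0)) k
                                          - smul (scst (xpm s j 0)) (xs s i) k)) e).
Definition CY5 :=
  forall i j e,
    lmulvar vu (toL (mcomm (msingle vu (xs true i)) (msingle vv (xs false j)))) e
    - lmulvar vv (toL (mcomm (msingle vu (xs true i)) (msingle vv (xs false j)))) e
    = - ((i == j)%:R * hbar) *:
        (toL (msingle vu (xis i)) e - toL (msingle vv (xis i)) e).
(* variables u_1..u_m are u_0..u_{m-1}, and v is the last variable u_m *)
Definition CY6 :=
  forall s i j, i != j ->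
    forall e : {ffun 'I_(`|1 - A i j|%N).+1 -> nat},
      \sum_(p : 'S_(`|1 - A i j|%N))
         mnest [seq msingle (widen_ord (leqnSn _) (p k)) (xs s i)
               | k <- enum 'I_(`|1 - A i j|%N)]
               (msingle ord_max (xs s j)) e
      = 0.
End Relations.

(* Main.v *)
Require Import Defs.
From HB Require Import structures.
From mathcomp Require Import all_boot all_order all_algebra all_fingroup.
Import Order.TTheory GRing.Theory Num.Theory.
Local Open Scope ring_scope.
Set Implicit Arguments. Unset Strict Implicit. Unset Printing Implicit Defensive.

Section MS.
Variables (B : nzRingType) (N : nat).
Implicit Types (S T : mser B N) (e : {ffun 'I_N -> nat}).

Definition indep (k : 'I_N) T := forall e, e k != 0%N -> T e = 0.
Definition upd e (k : 'I_N) (x : nat) : {ffun 'I_N -> nat} :=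
  [ffun j => if j == k then x else e j].

Lemma msingleE (k : 'I_N) (F : ser B) e :
  (forall j, j != k -> e j = 0%N) -> msingle k F e = F (e k).
Proof.
move=> H; rewrite /msingle; case: forallP => // [[]] j.
by apply/implyP => /H ->.
Qed.

Lemma indep_msingle (j k : 'I_N) (F : ser B) : j != k -> indep j (msingle k F).
Proof.
move=> jk e ej; rewrite /msingle; case: forallP => // H.
by move: (H j); rewrite jk /= (negbTE ej).
Qed.

Lemma mmul_sl (k : 'I_N) (F : ser B) T e :
  indep k T -> mmul (msingle k F) T e = F (e k) * T (upd e k 0).
Proof.
move=> iT; rewrite /mmul.
pose dd0 : {dffun forall j : 'I_N, 'I_(e j).+1} :=
  [ffun j => if j == k then ord_max else ord0].
rewrite (bigD1 dd0) //= big1 ?addr0.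
  rewrite msingleE; last by move=> j jk; rewrite !ffunE (negbTE jk).
  rewrite !ffunE eqxx /=; congr (_ * T _); apply/ffunP => j; rewrite !ffunE.
  by case: (j == k) => /=; rewrite ?subnn ?subn0.
move=> dd ndd.
case: (boolP [forall j, (j != k) ==> (([ffun j => nat_of_ord (dd j)] : {ffun 'I_N -> nat}) j == 0%N)]) => H.
  rewrite iT ?mulr0 // ffunE subn_eq0 -ltnNge.
  have Hk : nat_of_ord (dd k) != e k.
    apply: contra ndd => /eqP Hk; apply/eqP/ffunP => j; rewrite !ffunE.
    case: eqP => [->|/eqP jk]; apply/val_inj => //=.
    by move/forallP: H => /(_ j); rewrite jk ffunE => /eqP.
  by rewrite ltn_neqAle Hk -ltnS ltn_ord.
by rewrite /msingle (negbTE H) mul0r.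
Qed.

Lemma mmul_sr (k : 'I_N) (F : ser B) T e :
  indep k T -> mmul T (msingle k F) e = T (upd e k 0) * F (e k).
Proof.
move=> iT; rewrite /mmul.
pose dd0 : {dffun forall j : 'I_N, 'I_(e j).+1} :=
  [ffun j => if j == k then ord0 else ord_max].
rewrite (bigD1 dd0) //= big1 ?addr0.
  rewrite [msingle _ _ _]msingleE; last first.
    by move=> j jk; rewrite !ffunE (negbTE jk) /= subnn.
  rewrite !ffunE eqxx /= subn0; congr (T _ * _); apply/ffunP => j; rewrite !ffunE.
  by case: (j == k).
move=> dd ndd.
case: (boolP [forall j, (j != k) ==> (([ffun j => (e j - dd j)%N] : {ffun 'I_N -> nat}) j == 0%N)]) => H.
  rewrite iT ?mul0r // ffunE.
  apply: contra ndd => Hk; apply/eqP/ffunP => j; rewrite !ffunE.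
  case: eqP => [->|/eqP jk]; apply/val_inj => //=; first by apply/eqP.
  move/forallP: H => /(_ j); rewrite jk ffunE subn_eq0 => /= Hle.
  by apply/eqP; rewrite eqn_leq Hle -ltnS ltn_ord.
by rewrite /msingle (negbTE H) mulr0.
Qed.

Lemma indep_mmul k S T : indep k S -> indep k T -> indep k (mmul S T).
Proof.
move=> iS iT e ek; rewrite /mmul big1 // => dd _.
case: (boolP (nat_of_ord (dd k) == 0%N)) => H.
  by rewrite [T _]iT ?mulr0 // ffunE (eqP H) subn0.
by rewrite iS ?mul0r // ffunE.
Qed.

Lemma indep_mcomm k S T : indep k S -> indep k T -> indep k (mcomm S T).
Proof.
by move=> iS iT e ek; rewrite /mcomm (indep_mmul iS iT) // (indep_mmul iT iS) // subrr.
Qed.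


Definition zer e (ks : seq 'I_N) : {ffun 'I_N -> nat} :=
  [ffun j => if j \in ks then 0%N else e j].

Lemma indep_mnest k (l : seq 'I_N) (F : ser B) k0 G :
  k != k0 -> k \notin l ->
  indep k (mnest [seq msingle x F | x <- l] (msingle k0 G)).
Proof.
move=> kk0; elim: l => [|x l IH] /=; first by move=> _; apply: indep_msingle.
rewrite inE negb_or => /andP[kx kl]; apply: indep_mcomm; last exact: IH.
exact: indep_msingle.
Qed.

Lemma mnest_single (l : seq 'I_N) (F : ser B) (k0 : 'I_N) (G : ser B) e :
  uniq (k0 :: l) ->
  mnest [seq msingle x F | x <- l] (msingle k0 G) e
  = nest [seq F (e x) | x <- l] (msingle k0 G (zer e l)).
Proof.
elim: l e => [|x l IH] e /=.
  by move=> _; congr (msingle _ _ _); apply/ffunP => j; rewrite !ffunE.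
rewrite !inE negb_or => /andP[/andP[k0x k0l] /andP[xl ul]].
have iN : indep x (mnest [seq msingle x0 F | x0 <- l] (msingle k0 G)).
  by apply: indep_mnest => //; rewrite eq_sym.
rewrite /mcomm mmul_sl // mmul_sr // IH /=; last by rewrite k0l.
have -> : [seq F (upd e x 0 x0) | x0 <- l] = [seq F (e x0) | x0 <- l].
  apply/eq_in_map => y yl /=; rewrite ffunE; case: eqP => // exy.
  by move: xl; rewrite -exy yl.
have -> : zer (upd e x 0) l = zer e (x :: l).
  apply/ffunP => j; rewrite !ffunE inE; case: (j == x) => //=.
  by case: (_ \in _).
by [].
Qed.

End MS.


Definition mk2 (a b : nat) : {ffun 'I_2 -> nat} := [ffun k => if k == vu then a else b].
Definition iE (p q : int) : {ffun 'I_2 -> int} := [ffun k => if k == vu then p else q].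

Lemma I2_cases (j : 'I_2) : (j == vu) || (j == vv).
Proof. by case: j => [[|[|]]]. Qed.

Lemma I2_neq (j : 'I_2) : j != vu -> j = vv.
Proof. by case: j => [[|[|]]] // ? ?; apply/val_inj. Qed.

Lemma I2_neqv (j : 'I_2) : j != vv -> j = vu.
Proof. by case: j => [[|[|]]] // ? ?; apply/val_inj. Qed.

Lemma iE_eta (e : {ffun 'I_2 -> int}) : e = iE (e vu) (e vv).
Proof.
apply/ffunP => j; rewrite ffunE; case: eqP => [->//|/eqP /I2_neq ->//].
Qed.

Lemma mk2_eta (e : {ffun 'I_2 -> nat}) : e = mk2 (e vu) (e vv).
Proof.
apply/ffunP => j; rewrite ffunE; case: eqP => [->//|/eqP /I2_neq ->//].
Qed.

Lemma mk2u a b : mk2 a b vu = a. Proof. by rewrite ffunE eqxx. Qed.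
Lemma mk2v a b : mk2 a b vv = b. Proof. by rewrite ffunE. Qed.
Lemma iEu a b : iE a b vu = a. Proof. by rewrite ffunE eqxx. Qed.
Lemma iEv a b : iE a b vv = b. Proof. by rewrite ffunE. Qed.

Section Two.
Variable B : nzRingType.

Lemma msingle_u (F : ser B) a b : msingle vu F (mk2 a b) = if b == 0%N then F a else 0.
Proof.
rewrite /msingle mk2u; case: forallP => [H|H].
  by move: (H vv); rewrite mk2v => /= /eqP ->.
case: eqP => // b0; case: H => j; apply/implyP => /I2_neq ->; rewrite mk2v b0.
done.
Qed.

Lemma msingle_v (F : ser B) a b : msingle vv F (mk2 a b) = if a == 0%N then F b else 0.
Proof.
rewrite /msingle mk2v; case: forallP => [H|H].
  by move: (H vu); rewrite mk2u => /= /eqP ->.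
case: eqP => // b0; case: H => j; apply/implyP => /I2_neqv ->.
by rewrite mk2u b0.
Qed.

Lemma mmul_uv (F G : ser B) a b :
  mmul (msingle vu F) (msingle vv G) (mk2 a b) = F a * G b.
Proof.
rewrite mmul_sl; last exact: indep_msingle.
rewrite mk2u msingleE ?mk2v ?ffunE //=.
by move=> j /I2_neqv ->; rewrite ffunE.
Qed.

Lemma mmul_vu (F G : ser B) a b :
  mmul (msingle vv G) (msingle vu F) (mk2 a b) = G b * F a.
Proof.
rewrite mmul_sl; last exact: indep_msingle.
rewrite mk2v msingleE ?mk2u ?ffunE //= => j /I2_neq ->.
by rewrite ffunE.
Qed.

Lemma toL_iE (S : mser B 2) p q :
  toL S (iE p q) = if (p <= 0) && (q <= 0) then S (mk2 `|p|%N `|q|%N) else 0.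
Proof.
rewrite /toL; case: forallP => [H|H].
  move: (H vu) (H vv); rewrite iEu iEv => -> ->; congr S; apply/ffunP => j.
  by rewrite !ffunE; case: eqP.
case: ifP => // /andP [hp hq]; case: H => j.
by case/orP: (I2_cases j) => /eqP ->; rewrite ?iEu ?iEv.
Qed.

Lemma toL_neg (S : mser B 2) (a b : nat) : toL S (iE (- a%:Z) (- b%:Z)) = S (mk2 a b).
Proof. by rewrite toL_iE !oppr_le0 /= !abszN !absz_nat. Qed.

Lemma toL_posu (S : mser B 2) p q : 0 < p -> toL S (iE p q) = 0.
Proof. by move=> hp; rewrite toL_iE leNgt hp. Qed.

Lemma toL_posv (S : mser B 2) p q : 0 < q -> toL S (iE p q) = 0.
Proof. by move=> hq; rewrite toL_iE [q <= 0]leNgt hq andbF. Qed.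

Lemma lmul_u (L : lser B 2) p q : lmulvar vu L (iE p q) = L (iE (p - 1) q).
Proof.
rewrite /lmulvar; congr L; apply/ffunP => j; rewrite ffunE /iE !ffunE.
by case: j => [[|[|m]] hm] //=; rewrite subr0.
Qed.

Lemma lmul_v (L : lser B 2) p q : lmulvar vv L (iE p q) = L (iE p (q - 1)).
Proof.
rewrite /lmulvar; congr L; apply/ffunP => j; rewrite ffunE /iE !ffunE.
by case: j => [[|[|m]] hm] //=; rewrite subr0.
Qed.

End Two.

Lemma negS (a : nat) : - (a%:Z) - 1 = - (a.+1)%:Z.
Proof. by rewrite -opprD -addn1 PoszD. Qed.

Lemma int_cases (p : int) : (exists a : nat, p = - a%:Z) \/ p = 1 \/ 1 < p.
Proof.
case: p => [[|[|n]]|n]; first by left; exists 0%N.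
- by right; left.
- by right; right.
by left; exists n.+1; rewrite NegzE.
Qed.


Lemma lser_all (P : {ffun 'I_2 -> int} -> Prop) :
  (forall a b : nat, P (iE (- a%:Z) (- b%:Z))) ->
  (forall b : nat, P (iE 1 (- b%:Z))) ->
  (forall a : nat, P (iE (- a%:Z) 1)) ->
  (forall p q, (1 < p) || (1 < q) || (0 < p) && (0 < q) -> P (iE p q)) ->
  forall e, P e.
Proof.
move=> H1 H2 H3 H4 e; rewrite (iE_eta e).
case: (int_cases (e vu)) => [[a ->]|[->|hp]]; case: (int_cases (e vv)) => [[b ->]|[->|hq]] //;
  apply: H4; rewrite ?hp ?hq ?orbT //.
Qed.

Section Lin.
Variables (K : fieldType) (B : algType K).
Implicit Types (S : mser B 2).

Lemma lin_iE c (L : lser B 2) p q :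
  lin_uv c L (iE p q) = L (iE (p - 1) q) - L (iE p (q - 1)) + c *: L (iE p q).
Proof. by rewrite /lin_uv lmul_u lmul_v. Qed.

Lemma lin_neg c S (a b : nat) :
  lin_uv c (toL S) (iE (- a%:Z) (- b%:Z)) =
  S (mk2 a.+1 b) - S (mk2 a b.+1) + c *: S (mk2 a b).
Proof. by rewrite lin_iE !negS !toL_neg. Qed.

Lemma lin_1u c S (b : nat) : lin_uv c (toL S) (iE 1 (- b%:Z)) = S (mk2 0 b).
Proof.
rewrite lin_iE subrr (toL_posu _ _ ltr01) (toL_posu _ _ ltr01) scaler0 subr0 addr0.
by rewrite toL_iE oppr_le0 /= abszN absz_nat.
Qed.

Lemma lin_1v c S (a : nat) : lin_uv c (toL S) (iE (- a%:Z) 1) = - S (mk2 a 0).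
Proof.
rewrite lin_iE subrr (toL_posv _ _ ltr01) (toL_posv _ _ ltr01) scaler0 sub0r addr0.
by rewrite toL_iE oppr_le0 /= abszN absz_nat.
Qed.

Lemma lin_big c S p q :
  (1 < p) || (1 < q) || (0 < p) && (0 < q) -> lin_uv c (toL S) (iE p q) = 0.
Proof.
move=> H; rewrite lin_iE.
have H1 : toL S (iE (p - 1) q) = 0.
  case/orP: H => [/orP[hp|hq]|/andP[hp hq]]; first by rewrite toL_posu // subr_gt0.
    by rewrite toL_posv // (lt_trans ltr01).
  by rewrite toL_posv.
have H2 : toL S (iE p (q - 1)) = 0.
  case/orP: H => [/orP[hp|hq]|/andP[hp hq]]; first by rewrite toL_posu // (lt_trans ltr01).
    by rewrite toL_posv // subr_gt0.
  by rewrite toL_posu.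
have H3 : toL S (iE p q) = 0.
  case/orP: H => [/orP[hp|hq]|/andP[hp hq]]; first by rewrite toL_posu // (lt_trans ltr01).
    by rewrite toL_posv // (lt_trans ltr01).
  by rewrite toL_posu.
by rewrite H1 H2 H3 scaler0 subrr addr0.
Qed.

Lemma toLs_big (S : mser B 2) p q :
  (1 < p) || (1 < q) || (0 < p) && (0 < q) -> toL S (iE p q) = 0.
Proof.
case/orP => [/orP[hp|hq]|/andP[hp hq]]; first by rewrite toL_posu // (lt_trans ltr01).
  by rewrite toL_posv // (lt_trans ltr01).
by rewrite toL_posu.
Qed.

End Lin.


Section Smul.
Variable B : nzRingType.
Lemma smul_scstr (F : ser B) b k : smul F (scst b) k = F k * b.
Proof.
rewrite /smul big_ord_recr /= subnn big1 ?add0r // => l _.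
have : (k - l)%N != 0%N by rewrite subn_eq0 -ltnNge (ltn_ord l).
by rewrite /scst; case: (k - l)%N => [|m]; rewrite ?mulr0.
Qed.
Lemma smul_scstl (F : ser B) b k : smul (scst b) F k = b * F k.
Proof.
rewrite /smul big_ord_recl /= subn0 big1 ?addr0 // => l _.
by rewrite /scst /= mul0r.
Qed.
End Smul.

Section Shift.
Variables (K : fieldType) (B : algType K).
Implicit Types (F G X Xi : ser B) (c : K).

Lemma sshiftMl c y F m : sshift c (fun b => y * F b) m = y * sshift c F m.
Proof. by rewrite /sshift mulr_sumr; apply: eq_bigr => l _; rewrite scalerAr. Qed.
Lemma sshiftMr c y F m : sshift c (fun b => F b * y) m = sshift c F m * y.
Proof. by rewrite /sshift mulr_suml; apply: eq_bigr => l _; rewrite scalerAl. Qed.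

Lemma sshift_succ c X m : X 0%N = 0 ->
  sshift c (fun b => X b.+1) m = sshift c X m.+1 - c *: sshift c X m.
Proof.
move=> X0; rewrite /sshift.
case: m => [|m].
  rewrite !big_ord1 big_ord_recl big_ord1 /= X0 !scaler0 add0r subr0.
  done.
rewrite [X in _ = X - _]big_ord_recl [X in _ = _ - c *: X]big_ord_recl /= X0 !scaler0 !add0r.
rewrite big_ord_recr [X in _ = X - _]big_ord_recr /= scaler_sumr.
rewrite /bump /= !subnn !bin0 addrAC; congr (_ + _).
rewrite -sumrB; apply: eq_bigr => l _ /=.
rewrite !add1n !subSS !subSn ?leq_ord // binS natrD mulrDl scalerDl.
rewrite exprS scalerA mulrCA [X in _ + X *: _ - _]mulrCA addrK.
by [].
Qed.

Lemma sshift_E0 c (E : nat -> B) m : (forall b, E b.+1 = 0) ->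
  sshift c E m = if m == 0%N then E 0%N else 0.
Proof.
move=> HE; rewrite /sshift big_ord_recl big1 ?addr0 => [|l _]; last by rewrite HE scaler0.
case: m => [|m] /=; first by rewrite bin0 expr0 mulr1 scale1r.
by rewrite bin_small // mul0r scale0r.
Qed.
End Shift.

Lemma zmod_aux (V : zmodType) (A Bv C D E F : V) :
  A - (Bv - C) - C - (D - (E - F) + F) = A - Bv - (D - E) - (F + F).
Proof.
by rewrite !opprD !opprK !addrA addrK.
Qed.

Section Hard.
Variables (K : fieldType) (B : algType K).
Variables (Xi X : ser B) (c : K).

Definition Efun a b := Xi a.+1 * X b - Xi a * X b.+1 - c *: (Xi a * X b)
  - (X b * Xi a.+1 - X b.+1 * Xi a + c *: (X b * Xi a)).

Let Xt := sshift c X.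
Let S := sshift c (fun b => X b.+1).

Lemma sshift_Efun a m : sshift c (Efun a) m =
  Xi a.+1 * Xt m - Xi a * S m - c *: (Xi a * Xt m)
  - (Xt m * Xi a.+1 - S m * Xi a + c *: (Xt m * Xi a)).
Proof.
rewrite /Xt /S /sshift /Efun !mulr_sumr !mulr_suml !scaler_sumr.
rewrite -!sumrB -!big_split /= -!sumrB; apply: eq_bigr => l _.
rewrite !scalerBr !scalerDr !scalerN -!scalerAl -!scalerAr !scalerA [c * _]mulrC.
by [].
Qed.

Lemma hard_identity : Xi 0%N = 1 -> X 0%N = 0 -> (forall a b, Efun a b.+1 = 0) ->
  forall n, Efun n 0 = - (2 * c) *: smul Xt Xi n.
Proof.
move=> Xi0 X0 HE n.
have Hl : forall l, sshift c (Efun (n - l)) l = if l == 0%N then Efun (n - l) 0 else 0.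
  by move=> l; apply: sshift_E0.
have Xt0 : Xt 0 = 0 by rewrite /Xt /sshift big_ord1 X0 scaler0.
have key : Efun n 0 = \sum_(l < n.+1) sshift c (Efun (n - l)) l.
  rewrite big_ord_recl /= Hl subn0 /= big1 ?addr0 // => l _.
rewrite key.
under eq_bigr => l _ do rewrite sshift_Efun.
set g := fun k => - (Xi (n.+1 - k)%N * Xt k).
set h := fun k => - (Xt k * Xi (n.+1 - k)%N).
have E1 : \sum_(l < n.+1) (Xi (n - l)%N.+1 * Xt l - Xi (n - l)%N * Xt l.+1) = g n.+1 - g 0%N.
  rewrite -(big_mkord xpredT (fun l => Xi (n - l)%N.+1 * Xt l - Xi (n - l)%N * Xt l.+1)).
  apply: telescope_sumr_eq => // k /andP[_ kn].
  by rewrite /g subSS subSn // opprK addrC.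
have E2 : \sum_(l < n.+1) (Xt l * Xi (n - l)%N.+1 - Xt l.+1 * Xi (n - l)%N) = h n.+1 - h 0%N.
  rewrite -(big_mkord xpredT (fun l => Xt l * Xi (n - l)%N.+1 - Xt l.+1 * Xi (n - l)%N)).
  apply: telescope_sumr_eq => // k /andP[_ kn].
  by rewrite /h subSS subSn // opprK addrC.
have E3 : forall l, Xi (n - l)%N.+1 * Xt l - Xi (n - l)%N * S l - c *: (Xi (n - l)%N * Xt l)
  - (Xt l * Xi (n - l)%N.+1 - S l * Xi (n - l)%N + c *: (Xt l * Xi (n - l)%N))
  = (Xi (n - l)%N.+1 * Xt l - Xi (n - l)%N * Xt l.+1)
    - (Xt l * Xi (n - l)%N.+1 - Xt l.+1 * Xi (n - l)%N)
    - (2 * c) *: (Xt l * Xi (n - l)%N).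
  move=> l; rewrite /S sshift_succ // -/Xt.
  rewrite mulrBr mulrBl -scalerAr -scalerAl mulr_natl -scalerMnl mulr2n.
  exact: zmod_aux.
under eq_bigr => l _ do rewrite E3.
rewrite sumrB sumrB E1 E2 /g /h subnn subn0 Xi0 Xt0 mulr0 mul0r mulr1 mul1r oppr0.
by rewrite !subr0 subrr sub0r /smul -scaler_sumr scaleNr.
Qed.
End Hard.

Lemma lmod_aux (K : fieldType) (V : lmodType K) (h c : K) (p1 p2 p3 q1 q2 q3 : V) :
  h *: p1 - h *: p2 - c *: (h *: p3) - (h *: q1 - h *: q2 + c *: (h *: q3)) =
  h *: ((p1 - q1) - (p2 - q2) - c *: (p3 + q3)).
Proof.
rewrite !scalerBr !scalerDr !scalerA [h * c]mulrC.
set P1 := h *: p1; set P2 := h *: p2; set Q1 := h *: q1; set Q2 := h *: q2.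
set C := (c * h) *: p3; set D := (c * h) *: q3.
rewrite !opprD !opprK !addrA.
rewrite [P1 - P2 - C - Q1]addrAC [P1 - P2 - Q1 - C + Q2]addrAC [P1 - P2 - Q1]addrAC.
by [].
Qed.

Lemma mulZZ (K : fieldType) (B : algType K) (a b : K) (x y : B) :
  (a *: x) * (b *: y) = (a * b) *: (x * y).
Proof. by rewrite -scalerAl -scalerAr scalerA. Qed.

Lemma Efun_int (K : fieldType) (B : algType K) (Xi X : ser B) (y x : nat -> B) (h c : K) :
  (forall a, Xi a.+1 = h *: y a) -> (forall b, X b.+1 = h *: x b) ->
  forall a b, Efun Xi X c a.+1 b.+1 =
  (h * h) *: (comm (y a.+1) (x b) - comm (y a) (x b.+1) - c *: (y a * x b + x b * y a)).
Proof.
move=> HXi HX a b; rewrite /Efun !HXi !HX !mulZZ /comm; exact: lmod_aux.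
Qed.


Section Gen.
Variables (K : fieldType) (B : algType K).
Implicit Types (x y : B) (a b : K).

Lemma commZ a b x y : comm (a *: x) (b *: y) = (a * b) *: comm x y.
Proof.
by rewrite /comm scalerBr -!scalerAl -!scalerAr !scalerA [b * a]mulrC.
Qed.
Lemma comm1l y : comm 1 y = 0. Proof. by rewrite /comm mul1r mulr1 subrr. Qed.
Lemma comm1r y : comm y 1 = 0. Proof. by rewrite /comm mul1r mulr1 subrr. Qed.
Lemma comm0l y : comm 0 y = 0. Proof. by rewrite /comm mul0r mulr0 subrr. Qed.
Lemma comm0r y : comm y 0 = 0. Proof. by rewrite /comm mul0r mulr0 subrr. Qed.

Lemma mcomm_uv (F G : ser B) p q :
  mcomm (msingle vu F) (msingle vv G) (mk2 p q) = comm (F p) (G q).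
Proof. by rewrite /mcomm mmul_uv mmul_vu. Qed.

Lemma scale_cancel a x : a != 0 -> a *: x = 0 -> x = 0.
Proof. by move=> a0 /eqP; rewrite scaler_eq0 (negbTE a0) => /eqP. Qed.

Lemma scale_eq a x y : a != 0 -> a *: x = a *: y -> x = y.
Proof. by move=> a0; apply: scalerI. Qed.
End Gen.

Section Main.
Variables (K : fieldType) (B : algType K) (hT : vectType K) (n : nat).
Variables (A : 'I_n -> 'I_n -> int) (d : 'I_n -> nat).
Variables (alpha : 'I_n -> {linear hT -> K^o}) (iota : {linear hT -> B}).
Variables (hbar : K) (xi xp xm : 'I_n -> nat -> B).
Hypothesis hbar0 : hbar != 0.

Let hh0 : hbar * hbar != 0. Proof. by rewrite mulf_neq0. Qed.

Local Notation xis := (xis hbar xi).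
Local Notation xs := (xs hbar xp xm).

Lemma part1 : Y1 iota xi <-> CY1 iota hbar xi.
Proof.
split.
  case=> H1 H2 H3; split => //.
    move=> i j e; rewrite (mk2_eta e) mcomm_uv.
    case: (e vu) => [|r]; first by rewrite comm1l.
    case: (e vv) => [|t]; first by rewrite comm1r.
    by rewrite /= commZ H1 scaler0.
  move=> i h k; rewrite smul_scstr smul_scstl.
  case: k => [|r]; first by rewrite mul1r mulr1 subrr.
  by rewrite /= -scalerAl -scalerAr -scalerBr -/(comm _ _) H2 scaler0.
case=> H1 H2 H3; split => //.
  move=> i j r t; apply: (scale_cancel hh0).
  by rewrite -commZ; have := H1 i j (mk2 r.+1 t.+1); rewrite mcomm_uv.
move=> i r h; apply: (scale_cancel hbar0).
have := H2 i h r.+1; rewrite smul_scstr smul_scstl /=.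
by rewrite -scalerAl -scalerAr -scalerBr.
Qed.


Lemma move_iff (x p y z : B) (c : K) :
  (x + (- c) *: p = y - z) <-> (x - c *: p - y = - z).
Proof.
rewrite scaleNr; split => [->|H]; first by rewrite addrC addKr.
by rewrite -[x - _](subrK y) H addrC.
Qed.

Lemma Y2_CY2 : Y2 alpha iota xp xm <-> CY2 alpha iota hbar xp xm.
Proof.
split => H s h i k.
  rewrite smul_scstr smul_scstl; case: k => [|r] /=; first by rewrite mulr0 mul0r subrr scaler0.
  by rewrite -scalerAl -scalerAr -scalerBr -/(comm _ _) H !scalerA mulrC.
apply: (scale_eq hbar0); have := H s h i k.+1.
by rewrite smul_scstr smul_scstl /= -scalerAl -scalerAr -scalerBr -/(comm _ _) => ->; rewrite !scalerA mulrC.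
Qed.

Local Notation cc s i j := (sgn K s * acoef A d hbar i j).

Lemma CY3_coef : CY3 A d hbar xi xp xm <->
  forall s i j a b, Efun (xis i) (xs s j) (cc s i j) a b =
    - (2 * cc s i j) *: (if b == 0%N then smul (sshift (cc s i j) (xs s j)) (xis i) a else 0).
Proof.
split.
  move=> H s i j a b; have := H s i j (iE (- a%:Z) (- b%:Z)).
  rewrite !lin_neg toL_neg !mmul_uv !mmul_vu msingle_u => /move_iff.
  by rewrite /Efun => ->; rewrite scaleNr mulrA.
move=> H s i j; apply: lser_all.
- move=> a b; rewrite !lin_neg toL_neg !mmul_uv !mmul_vu msingle_u.
  rewrite -[2 * sgn K s * _]mulrA; apply/move_iff; rewrite -[in RHS]scaleNr; exact: H.
- move=> b; rewrite !lin_1u toL_posu // scaler0 subr0 mmul_uv mmul_vu /=.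
  by rewrite mul1r mulr1.
- move=> a; rewrite !lin_1v toL_posv // scaler0 subr0 mmul_uv mmul_vu /=.
  by rewrite mul0r mulr0.
- by move=> p q hpq; rewrite !lin_big // toLs_big // scaler0 subr0.
Qed.


Variable alphav : 'I_n -> hT.
Hypothesis hreal : forall i j, alpha j (alphav i) = (A i j)%:~R :> K.
Hypothesis hxi0 : forall i, xi i 0%N = (d i)%:R *: iota (alphav i).
Hypothesis h2 : (2 : K) != 0.

Lemma Efun3 s i j r t : Efun (xis i) (xs s j) (cc s i j) r.+1 t.+1 =
  (hbar * hbar) *: (comm (xi i r.+1) (xpm xp xm s j t) - comm (xi i r) (xpm xp xm s j t.+1)
     - cc s i j *: (xi i r * xpm xp xm s j t + xpm xp xm s j t * xi i r)).
Proof. exact: Efun_int. Qed.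

Lemma lmod_aux2 (V : lmodType K) (c : K) (P Q X' X : V) :
  P - X' - c *: X - (Q - X' + c *: X) = (P - Q) - (c *: X + c *: X).
Proof.
rewrite !opprD !opprK !addrA [P - X' - _ - Q]addrAC [P - X' - Q - _ + X']addrAC.
by rewrite [P - X' - Q]addrAC subrK.
Qed.

Lemma Efun3_0 s i j t : Y2 alpha iota xp xm ->
  Efun (xis i) (xs s j) (cc s i j) 0 t.+1 = 0.
Proof.
move=> HY2; rewrite /Efun /= !mul1r !mulr1 !mulZZ lmod_aux2.
rewrite -scalerBr hxi0 -scalerAl -scalerAr -scalerBr -/(comm _ _) HY2 hreal.
rewrite !scalerA -scalerDl; apply/eqP; rewrite subr_eq0; apply/eqP; congr (_ *: _).
rewrite /acoef -mulr2n -mulrnAl -mulrnAr -[_ *+ 2]mulr_natr divfK // [RHS]mulrC !mulrA.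
by rewrite [hbar * sgn K s * hbar]mulrAC [hbar * hbar * sgn K s * _]mulrAC.
Qed.


Lemma part2 : Y2 alpha iota xp xm /\ Y3 A d hbar xi xp xm <->
  CY2 alpha iota hbar xp xm /\ CY3 A d hbar xi xp xm.
Proof.
split.
  case=> HY2 HY3; split; first exact/Y2_CY2.
  apply/CY3_coef => s i j.
  have EF : forall a t, Efun (xis i) (xs s j) (cc s i j) a t.+1 = 0.
    move=> [|r] t; first exact: Efun3_0.
    by rewrite Efun3 HY3 subrr scaler0.
  move=> a [|t]; last by rewrite EF /= scaler0.
  by rewrite /= hard_identity.
case=> HC2 HC3; have HY2 := proj2 Y2_CY2 HC2; split => // s i j r t.
have := proj1 CY3_coef HC3 s i j r.+1 t.+1.
rewrite Efun3 /= scaler0 => /(scale_cancel hh0)/eqP; rewrite subr_eq0 => /eqP.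
by [].
Qed.


Lemma move_iff2 (x p y z : B) (c : K) :
  (x + (- c) *: p = y + z) <-> (x - c *: p - y = z).
Proof.
rewrite scaleNr; split => [->|H]; first by rewrite addrC addKr.
by rewrite -[x - _](subrK y) H addrC.
Qed.

Lemma Efun_00 (Xi X : ser B) c b : Xi 0%N = 0 -> X 0%N = 0 ->
  Efun Xi X c 0 b = Xi 1%N * X b - X b * Xi 1%N.
Proof.
move=> H1 H2; rewrite /Efun H1 !mul0r !mulr0 scaler0 !subr0 addr0.
by [].
Qed.

Lemma Efun_b0 (Xi X : ser B) c a : X 0%N = 0 ->
  Efun Xi X c a 0 = - (Xi a * X 1%N - X 1%N * Xi a).
Proof.
move=> H2; rewrite /Efun H2 !mul0r !mulr0 scaler0 !sub0r addr0.
by rewrite subr0 opprB addrC opprK.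
Qed.

Lemma CY4_coef : CY4 A d hbar xp xm <->
  forall s i j a b, Efun (xs s i) (xs s j) (cc s i j) a b =
    hbar *: ((if a == 0%N then comm (xpm xp xm s i 0) (xs s j b) else 0)
             - (if b == 0%N then comm (xs s i a) (xpm xp xm s j 0) else 0)).
Proof.
split.
  move=> H s i j a b; have := H s i j (iE (- a%:Z) (- b%:Z)).
  rewrite !lin_neg !toL_neg !mmul_uv !mmul_vu msingle_u msingle_v /=.
  rewrite !smul_scstl !smul_scstr => /move_iff2.
  by rewrite /Efun => ->.
move=> H s i j; apply: lser_all.
- move=> a b; rewrite !lin_neg !toL_neg !mmul_uv !mmul_vu msingle_u msingle_v /=.
  rewrite !smul_scstl !smul_scstr; apply/move_iff2; exact: H.
- move=> b; rewrite !lin_1u !toL_posu // subrr scaler0 addr0 mmul_uv mmul_vu /=.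
  by rewrite mul0r mulr0.
- move=> a; rewrite !lin_1v !toL_posv // subrr scaler0 addr0 mmul_uv mmul_vu /=.
  by rewrite mul0r mulr0.
- by move=> p q hpq; rewrite !lin_big // !toLs_big // subrr scaler0 addr0.
Qed.

Lemma part3 : Y4 A d hbar xp xm <-> CY4 A d hbar xp xm.
Proof.
split.
  move=> HY4; apply/CY4_coef => s i j [|r] [|t].
  - by rewrite Efun_00 //= mulr0 mul0r subrr comm0r comm0l subrr scaler0.
  - by rewrite Efun_00 //= subr0 /comm scalerBr scalerAl scalerAr.
  - by rewrite Efun_b0 //= sub0r scalerN /comm scalerBr scalerAr scalerAl.
  - rewrite (Efun_int (y := xpm xp xm s i) (x := xpm xp xm s j) (h := hbar)) // HY4 subrr scaler0.
    by rewrite /= subrr scaler0.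
move=> HC s i j r t; have := proj1 CY4_coef HC s i j r.+1 t.+1.
rewrite (Efun_int (y := xpm xp xm s i) (x := xpm xp xm s j) (h := hbar)) //= subrr scaler0.
by move=> /(scale_cancel hh0)/eqP; rewrite subr_eq0 => /eqP.
Qed.


Lemma CY5_coef : CY5 hbar xi xp xm <->
  forall i j a b, comm (xs true i a.+1) (xs false j b) - comm (xs true i a) (xs false j b.+1) =
   - ((i == j)%:R * hbar) *: ((if b == 0%N then xis i a else 0) - (if a == 0%N then xis i b else 0)).
Proof.
have E : forall (L : lser B 2) e, lmulvar vu L e - lmulvar vv L e = lin_uv 0 L e.
  by move=> L e; rewrite /lin_uv scale0r addr0.
split.
  move=> H i j a b; have := H i j (iE (- a%:Z) (- b%:Z)).
  by rewrite E lin_neg !toL_neg !mcomm_uv msingle_u msingle_v scale0r addr0.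
move=> H i j; apply: lser_all.
- move=> a b; rewrite E lin_neg !toL_neg !mcomm_uv msingle_u msingle_v scale0r addr0.
  exact: H.
- move=> b; rewrite E lin_1u !toL_posu // subrr scaler0 mcomm_uv /=.
  by rewrite comm0l.
- move=> a; rewrite E lin_1v !toL_posv // subrr scaler0 mcomm_uv /=.
  by rewrite comm0r oppr0.
- by move=> p q hpq; rewrite E lin_big // !toLs_big // subrr scaler0.
Qed.

Lemma natZ (k : nat) (a : K) (x : B) : a *: (k%:R * x) = (k%:R * a) *: x.
Proof. by rewrite mulr_natl -scaler_nat scalerA mulrC. Qed.

Lemma part4 : Y5 xi xp xm <-> CY5 hbar xi xp xm.
Proof.
split.
  move=> HY5; apply/CY5_coef => i j [|r] [|t] /=.
  - by rewrite comm0r comm0l subrr subrr scaler0.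
  - rewrite comm0l subr0 sub0r commZ HY5 add0n scalerN scaleNr opprK scalerA.
    by rewrite natZ mulrA.
  - rewrite comm0r sub0r subr0 commZ HY5 addn0 scaleNr scalerA.
    by rewrite natZ mulrA.
  - by rewrite !commZ !HY5 addnS addSn subrr subrr scaler0.
move=> /CY5_coef HC i j r; elim: r => [|r IH] t.
  have := HC i j 0%N t.+1; rewrite /= comm0l subr0 sub0r commZ add0n scalerN scaleNr opprK scalerA.
  rewrite -mulrA -natZ => /(scale_eq hh0).
  by [].
have := HC i j r.+1 t.+1; rewrite /= !commZ subrr scaler0 -scalerBr.
move=> /(scale_cancel hh0)/eqP; rewrite subr_eq0 => /eqP ->.
by rewrite IH addnS addSn.
Qed.

End Main.


Section Nest.
Variables (K : fieldType) (B : algType K).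

Lemma nest_scale (h : K) (l : seq B) (z : B) :
  nest [seq h *: y | y <- l] (h *: z) = h ^+ (size l).+1 *: nest l z.
Proof.
elim: l => [|y l IH] /=; first by rewrite expr1.
by rewrite IH commZ -exprS.
Qed.

Lemma nest_0l (l : seq B) (z : B) : 0 \in l -> nest l z = 0.
Proof.
elim: l => [|y l IH] //=; rewrite inE => /orP[/eqP <-|/IH ->].
  exact: comm0l.
exact: comm0r.
Qed.

Lemma nest_0r (l : seq B) : nest l 0 = 0.
Proof. by elim: l => [|y l IH] //=; rewrite IH comm0r. Qed.

Variable m : nat.
Let w := widen_ord (leqnSn m).

Lemma w_inj : injective w.
Proof. by move=> a b H; apply/val_inj; exact: (congr1 val H). Qed.

Lemma CY6_term (F G : ser B) (e : {ffun 'I_m.+1 -> nat}) (p : 'S_m) :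
  mnest [seq msingle (w (p k)) F | k <- enum 'I_m] (msingle ord_max G) e
  = nest [seq F (e (w (p k))) | k <- enum 'I_m] (G (e ord_max)).
Proof.
set ks := [seq w (p k) | k <- enum 'I_m].
have -> : [seq msingle (w (p k)) F | k <- enum 'I_m] = [seq msingle x F | x <- ks].
  by rewrite /ks -map_comp.
have uks : uniq (ord_max :: ks).
  rewrite /= map_inj_uniq ?enum_uniq; last by move=> a b /w_inj /perm_inj.
  rewrite andbT; apply/mapP => [[k _ /(congr1 val) /=]] E.
  by move: (ltn_ord (p k)); rewrite -E ltnn.
rewrite mnest_single // /ks -map_comp; congr nest.
rewrite msingleE ?ffunE; last first.
  move=> j jm; rewrite ffunE; case: ifP => // /negP []; apply/mapP.
  have jlt : (j < m)%N.
    by move: (ltn_ord j); rewrite ltnS leq_eqVlt => /orP[/eqP E|//]; case/eqP: jm; apply/val_inj.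
  exists (p^-1 (Ordinal jlt))%g; first by rewrite mem_enum.
  by rewrite permKV; apply/val_inj.
have -> : (ord_max \in ks) = false.
  by move: uks; rewrite /= => /andP[/negbTE].
by [].
Qed.
End Nest.

Section P5.
Variables (K : fieldType) (B : algType K) (n : nat).
Variables (A : 'I_n -> 'I_n -> int) (hbar : K) (xp xm : 'I_n -> nat -> B).
Hypothesis hbar0 : hbar != 0.

Lemma part5 : Y6 A xp xm <-> CY6 A hbar xp xm.
Proof.
split.
  move=> HY6 s i j nij e; set m := `|1 - A i j|%N.
  rewrite (eq_bigr _ (fun p _ => CY6_term _ _ _ _)).
  case: (boolP [&& [forall k : 'I_m, e (widen_ord (leqnSn m) k) != 0%N] & e ord_max != 0%N]).
    case/andP => /forallP Hk Ht.
    pose r := fun k : 'I_m => (e (widen_ord (leqnSn m) k)).-1.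
    pose t := (e ord_max).-1.
    have -> : xs hbar xp xm s j (e ord_max) = hbar *: xpm xp xm s j t.
      by rewrite /t; case: (e ord_max) Ht.
    have Hterm : forall p : 'S_m,
      nest [seq xs hbar xp xm s i (e (widen_ord (leqnSn m) (p k))) | k <- enum 'I_m]
           (hbar *: xpm xp xm s j t)
      = hbar ^+ m.+1 *: nest [seq xpm xp xm s i (r (p k)) | k <- enum 'I_m] (xpm xp xm s j t).
      move=> p; transitivity (nest [seq hbar *: y | y <- [seq xpm xp xm s i (r (p k)) | k <- enum 'I_m]]
                                 (hbar *: xpm xp xm s j t)).
        congr nest; rewrite -[RHS]map_comp; apply/eq_in_map => k _ /=.
        by rewrite /r; case: (e _) (Hk (p k)).
      by rewrite nest_scale size_map size_enum_ord.
    by rewrite (eq_bigr _ (fun p _ => Hterm p)) -scaler_sumr HY6 ?scaler0.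
  move=> Hno; apply: big1 => p _.
  case/nandP: Hno => [/forallPn [k /negPn /eqP ek]|/negPn /eqP et].
    apply: nest_0l; apply/mapP; exists (p^-1 k)%g; first by rewrite mem_enum.
    by rewrite permKV ek.
  by rewrite et nest_0r.
move=> HC s i j nij r t; set m := `|1 - A i j|%N.
pose e : {ffun 'I_m.+1 -> nat} :=
  [ffun l => if (insub (val l) : option 'I_m) is Some k then (r k).+1 else t.+1].
have ew : forall k : 'I_m, e (widen_ord (leqnSn m) k) = (r k).+1.
  by move=> k; rewrite ffunE /= (valK k).
have em : e ord_max = t.+1 by rewrite ffunE insubN // ltnn.
have := HC s i j nij e; rewrite (eq_bigr _ (fun p _ => CY6_term _ _ _ _)) em.
have Hterm : forall p : 'S_m,
  nest [seq xs hbar xp xm s i (e (widen_ord (leqnSn m) (p k))) | k <- enum 'I_m]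
       (xs hbar xp xm s j t.+1)
  = hbar ^+ m.+1 *: nest [seq xpm xp xm s i (r (p k)) | k <- enum 'I_m] (xpm xp xm s j t).
  move=> p; transitivity (nest [seq hbar *: y | y <- [seq xpm xp xm s i (r (p k)) | k <- enum 'I_m]]
                             (hbar *: xpm xp xm s j t)).
    congr nest; rewrite -[RHS]map_comp; apply/eq_in_map => k _ /=.
    by rewrite ew.
  by rewrite nest_scale size_map size_enum_ord.
rewrite (eq_bigr _ (fun p _ => Hterm p)) -scaler_sumr; apply: scale_cancel.
exact: expf_neq0.
Qed.
End P5.


Theorem proposition2p3 (K : fieldType) (B : algType K) (hT : vectType K) (n : nat)
    (A : 'I_n -> 'I_n -> int) (d : 'I_n -> nat)
    (alpha : 'I_n -> {linear hT -> K^o}) (alphav : 'I_n -> hT)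
    (iota : {linear hT -> B}) (hbar : K) (xi xp xm : 'I_n -> nat -> B) :
  [pchar K] =i pred0 ->
  GCM A -> symmetrising A d -> realization A alpha alphav ->
  injective iota -> hbar != 0 ->
  (forall i, xi i 0%N = (d i)%:R *: iota (alphav i)) ->
  [/\ Y1 iota xi <-> CY1 iota hbar xi,
      Y2 alpha iota xp xm /\ Y3 A d hbar xi xp xm <->
        CY2 alpha iota hbar xp xm /\ CY3 A d hbar xi xp xm,
      Y4 A d hbar xp xm <-> CY4 A d hbar xp xm,
      Y5 xi xp xm <-> CY5 hbar xi xp xm
    & Y6 A xp xm <-> CY6 A hbar xp xm].
Proof.
move=> hchar _ _ [hreal _ _ _] _ hbar0 hxi0.
have h2 : (2 : K) != 0 by rewrite (proj1 (pcharf0P K) hchar).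
split.
- exact: part1.
- exact: (part2 _ _ hbar0 hreal hxi0 h2).
- exact: part3.
- exact: part4.
- exact: part5.
Qed.
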